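(* Under Assumptions 1–4 below, and with $\beta\le\frac{1}{\omega+1}$, the iterates of Algorithm 2Direction satisfy, for every $t\ge0$, $$\mathbb E_t\Big[\frac1n\sum_{i=1}^n\|h_i^{t+1}-\nabla f_i(z^{t+1})\|^2\Big]\le8p\Big(1+\frac p\beta\Big)L_{\max}D_f(z^t,y^{t+1})+4p\Big(1+\frac p\beta\Big)\widehat L^2\,\mathbb E_t\|x^{t+1}-y^{t+1}\|^2+\Big(1-\frac\beta2\Big)\frac1n\sum_{i=1}^n\|h_i^t-\nabla f_i(z^t)\|^2,$$ where $D_f(x,y)=f(x)-f(y)-\langle\nabla f(y),x-y\rangle$.
   Context: Setting: $f=\frac1n\sum_{i=1}^nf_i$, $f_i:\mathbb R^d\to\mathbb R$. Assumption 1: each $f_i$ is $L_i$-smooth, $L_{\max}=\max_iL_i$, and $\widehat L>0$ satisfies $\frac1n\sum_i\|\nabla f_i(x)-\nabla f_i(y)\|^2\le\widehat L^2\|x-y\|^2$ for all $x,y$. Assumption 2: $f$ is $L$-smooth. Assumption 3: each $f_i$ is convex and $f$ is $\mu$-strongly convex ($\mu\ge0$) with minimizer $x^*$. Assumption 4: the randomness of all compressors is drawn independently (of each other, of the coins $c^t$, and of the past). Compressor classes: $\mathbb U(\omega)$ ($\omega\ge0$) = stochastic maps $\mathcal C$ with $\mathbb E\mathcal C(x)=x$, $\mathbb E\|\mathcal C(x)-x\|^2\le\omega\|x\|^2$; $\mathbb B(\alpha)$ ($\alpha\in(0,1]$) = possibly stochastic maps with $\mathbb E\|\mathcal C(x)-x\|^2\le(1-\alpha)\|x\|^2$.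 Algorithm 2Direction: compressors $\mathcal C_i^{D,y},\mathcal C_i^{D,z}\in\mathbb U(\omega)$ (workers), $\mathcal C^P\in\mathbb B(\alpha)$ (server); parameters $\bar L>0$, $\mu\ge0$, $p\in(0,1]$, $\Gamma_0\ge1$, $\tau\in(0,1]$, $x^0,h_1^0,\dots,h_n^0,k^0,v^0\in\mathbb R^d$. Set $\beta=1/(\omega+1)$, $w^0=z^0=u^0=x^0$, $h^0=\frac1n\sum_ih_i^0$, $\theta_{\min}=\frac14\min\{1,\alpha/p,\tau/p,\beta/p\}$. For $t=0,1,\dots$: let $\bar\theta_{t+1}$ be the largest root of $p\bar L\Gamma_t\theta^2+p(\bar L+\Gamma_t\mu)\theta-(\bar L+\Gamma_t\mu)=0$, $\theta_{t+1}=\min\{\bar\theta_{t+1},\theta_{\min}\}$, $\gamma_{t+1}=p\theta_{t+1}\Gamma_t/(1-p\theta_{t+1})$, $\Gamma_{t+1}=\Gamma_t+\gamma_{t+1}$; $y^{t+1}=\theta_{t+1}w^t+(1-\theta_{t+1})z^t$; $m_i^{t,y}=\mathcal C_i^{D,y}(\nabla f_i(y^{t+1})-h_i^t)$; $g^{t+1}=h^t+\frac1n\sum_im_i^{t,y}$; $u^{t+1}=\arg\min_x\{\langle g^{t+1},x\rangle+\frac{\bar L+\Gamma_t\mu}{2\gamma_{t+1}}\|x-u^t\|^2+\frac\mu2\|x-y^{t+1}\|^2\}$; $q^{t+1}=\arg\min_x\{\langle k^t,x\rangle+\frac{\bar L+\Gamma_t\mu}{2\gamma_{t+1}}\|x-w^t\|^2+\frac\mu2\|x-y^{t+1}\|^2\}$;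 $w^{t+1}=q^{t+1}+\mathcal C^P(u^{t+1}-q^{t+1})$; $x^{t+1}=\theta_{t+1}u^{t+1}+(1-\theta_{t+1})z^t$; draw $c^t\sim\mathrm{Bernoulli}(p)$, and set $(k^{t+1},z^{t+1})=(v^t,x^{t+1})$ if $c^t=1$, $(k^{t+1},z^{t+1})=(k^t,z^t)$ if $c^t=0$; $m_i^{t,z}=\mathcal C_i^{D,z}(\nabla f_i(z^{t+1})-h_i^t)$; $h_i^{t+1}=h_i^t+\beta m_i^{t,z}$; $v^{t+1}=(1-\tau)v^t+\tau(h^t+\frac1n\sum_im_i^{t,z})$; $h^{t+1}=h^t+\frac\beta n\sum_im_i^{t,z}$. $\mathbb E_t$ denotes conditional expectation given the randomness of the first $t$ iterations. *)

(* Defs.v *)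
From HB Require Import structures.
From mathcomp Require Import all_boot all_order all_algebra.
From mathcomp Require Import all_classical all_reals all_analysis.
Set Implicit Arguments.
Unset Strict Implicit.
Unset Printing Implicit Defensive.
Import Order.TTheory GRing.Theory Num.Theory.
Import numFieldNormedType.Exports.
Local Open Scope classical_set_scope.
Local Open Scope ring_scope.

Definition dot (R : realType) (d : nat) (u v : 'rV[R]_d) : R :=
  \sum_(k < d) u 0 k * v 0 k.

Definition sqn (R : realType) (d : nat) (u : 'rV[R]_d) : R := dot u u.

Definition enorm (R : realType) (d : nat) (u : 'rV[R]_d) : R := Num.sqrt (sqn u).

Definition is_grad (R : realType) (d : nat) (f : 'rV[R]_d -> R)
    (g : 'rV[R]_d -> 'rV[R]_d) : Prop :=
  forall x, differentiable f x /\ forall h, 'd f x h = dot (g x) h.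

Definition smooth (R : realType) (d : nat) (g : 'rV[R]_d -> 'rV[R]_d) (L : R) : Prop :=
  forall x y, enorm (g x - g y) <= L * enorm (x - y).

Definition convex_fun (R : realType) (d : nat) (f : 'rV[R]_d -> R) : Prop :=
  forall (x y : 'rV[R]_d) (l : R), 0 <= l <= 1 ->
    f (l *: x + (1 - l) *: y) <= l * f x + (1 - l) * f y.

Definition strongly_convex (R : realType) (d : nat) (f : 'rV[R]_d -> R) (mu : R) : Prop :=
  convex_fun (fun x => f x - mu / 2 * sqn x).

Definition favg (R : realType) (d n : nat) (f : 'I_n -> 'rV[R]_d -> R) (x : 'rV[R]_d) : R :=
  n%:R^-1 * \sum_(i < n) f i x.
Definition gavg (R : realType) (d n : nat) (g : 'I_n -> 'rV[R]_d -> 'rV[R]_d)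
    (x : 'rV[R]_d) : 'rV[R]_d :=
  n%:R^-1 *: \sum_(i < n) g i x.

Definition bregman (R : realType) (d : nat) (f : 'rV[R]_d -> R)
    (g : 'rV[R]_d -> 'rV[R]_d) (x y : 'rV[R]_d) : R :=
  f x - f y - dot (g y) (x - y).

Definition Lmax (R : realType) (n : nat) (L : 'I_n -> R) : R :=
  \big[Num.max/0]_(i < n) L i.

(* A (stochastic) compressor is a map C : S -> R^d -> R^d, where the   *)
(* first argument is its internal randomness, distributed as P.       *)

Definition in_U (R : realType) (d : nat) (dS : measure_display) (S : measurableType dS)
    (P : probability S R) (C : S -> 'rV[R]_d -> 'rV[R]_d) (om : R) : Prop :=
  forall x : 'rV[R]_d,
    (forall k : 'I_d, P.-integrable setT (fun s => (C s x 0 k)%:E) /\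
       (\int[P]_s (C s x 0 k)%:E = (x 0 k)%:E)%E) /\
    (\int[P]_s (sqn (C s x - x))%:E <= (om * sqn x)%:E)%E.

Definition in_B (R : realType) (d : nat) (dS : measure_display) (S : measurableType dS)
    (P : probability S R) (C : S -> 'rV[R]_d -> 'rV[R]_d) (alpha : R) : Prop :=
  forall x : 'rV[R]_d,
    (forall k : 'I_d, measurable_fun setT (fun s => C s x 0 k)) /\
    (\int[P]_s (sqn (C s x - x))%:E <= ((1 - alpha) * sqn x)%:E)%E.

Definition gen_sets (R : realType) (d : nat) (S : Type)
    (C : S -> 'rV[R]_d -> 'rV[R]_d) : set (set S) :=
  [set A | exists (x : 'rV[R]_d) (k : 'I_d) (B : set R),
             measurable B /\ A = (fun s => C s x 0 k) @^-1` B].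

Definition mutually_independent (R : realType) (d n : nat) (dS : measure_display)
    (S : measurableType dS) (P : probability S R)
    (C : 'I_n -> S -> 'rV[R]_d -> 'rV[R]_d) : Prop :=
  forall E : 'I_n -> set S, (forall i, <<s gen_sets (C i) >> (E i)) ->
    P (\bigcap_i E i) = (\prod_(i < n) P (E i))%E.

Record state (R : realType) (d n : nat) := State {
  st_w : 'rV[R]_d;  st_z : 'rV[R]_d;  st_u : 'rV[R]_d;
  st_k : 'rV[R]_d;  st_v : 'rV[R]_d;
  st_h : 'I_n -> 'rV[R]_d;
  st_hbar : 'rV[R]_d;
  st_Gam : R }.

Record iterates (R : realType) (d n : nat) := Iterates {
  it_y : 'rV[R]_d;  it_g : 'rV[R]_d;  it_u : 'rV[R]_d;  it_q : 'rV[R]_d;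
  it_w : 'rV[R]_d;  it_x : 'rV[R]_d;  it_z : 'rV[R]_d;  it_k : 'rV[R]_d;
  it_h : 'I_n -> 'rV[R]_d;  it_v : 'rV[R]_d;  it_hbar : 'rV[R]_d;  it_Gam : R }.

(* largest root of  p Lb G th^2 + p (Lb + G mu) th - (Lb + G mu) = 0 *)
Definition theta_bar (R : realType) (Lb mu p G : R) : R :=
  let A := p * Lb * G in
  let B := p * (Lb + G * mu) in
  let C := Lb + G * mu in
  (- B + Num.sqrt (B ^+ 2 + 4 * A * C)) / (2 * A).

Definition theta_min (R : realType) (alpha p tau beta : R) : R :=
  4^-1 * Num.min 1 (Num.min (alpha / p) (Num.min (tau / p) (beta / p))).

Definition theta_next (R : realType) (Lb mu p tau alpha beta G : R) : R :=
  Num.min (theta_bar Lb mu p G) (theta_min alpha p tau beta).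

Definition gamma_next (R : realType) (p th G : R) : R := p * th * G / (1 - p * th).

Definition y_next (R : realType) (d n : nat) (Lb mu p tau alpha beta : R)
    (s : state R d n) : 'rV[R]_d :=
  let th := theta_next Lb mu p tau alpha beta (st_Gam s) in
  th *: st_w s + (1 - th) *: st_z s.

(* argmin_x { <a0,x> + c/2 ||x - b||^2 + mu/2 ||x - y||^2 }  (c > 0, mu >= 0),
   written in closed form (the objective is a strictly convex quadratic) *)
Definition prox_step (R : realType) (d : nat) (a0 : 'rV[R]_d) (c : R) (b : 'rV[R]_d)
    (mu : R) (y : 'rV[R]_d) : 'rV[R]_d :=
  (c + mu)^-1 *: (c *: b + mu *: y - a0).

(* One iteration, given the realizations of the worker compressors
   Cy i = C_i^{D,y}, of the server compressor CP = C^P, of the coin c = c^t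
   and of the worker compressors Cz i = C_i^{D,z}. *)
Definition step (R : realType) (d n : nat) (Lb mu p tau alpha beta : R)
    (gf : 'I_n -> 'rV[R]_d -> 'rV[R]_d)
    (Cy : 'I_n -> 'rV[R]_d -> 'rV[R]_d) (CP : 'rV[R]_d -> 'rV[R]_d) (c : bool)
    (Cz : 'I_n -> 'rV[R]_d -> 'rV[R]_d) (s : state R d n) : iterates R d n :=
  let G := st_Gam s in
  let th := theta_next Lb mu p tau alpha beta G in
  let ga := gamma_next p th G in
  let cst := (Lb + G * mu) / ga in
  let y := y_next Lb mu p tau alpha beta s in
  let my := fun i => Cy i (gf i y - st_h s i) in
  let g := st_hbar s + n%:R^-1 *: \sum_(i < n) my i in
  let u := prox_step g cst (st_u s) mu y in
  let q := prox_step (st_k s) cst (st_w s) mu y in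
  let w := q + CP (u - q) in
  let x := th *: u + (1 - th) *: st_z s in
  let k' := if c then st_v s else st_k s in
  let z' := if c then x else st_z s in
  let mz := fun i => Cz i (gf i z' - st_h s i) in
  let h' := fun i => st_h s i + beta *: mz i in
  let v' := (1 - tau) *: st_v s + tau *: (st_hbar s + n%:R^-1 *: \sum_(i < n) mz i) in
  let hb' := st_hbar s + (beta / n%:R) *: \sum_(i < n) mz i in
  Iterates y g u q w x z' k' h' v' hb' (G + ga).

(* E_t: expectation over the fresh randomness of iteration t, which is
   independent of the past and consists of independent blocks
   (worker y-compressors, server compressor, coin ~ Bernoulli(p),
   worker z-compressors); written as the iterated (Fubini) integral
   against the product of their laws. *)
Definition Et (R : realType)
    (dy : measure_display) (Sy : measurableType dy) (Py : probability Sy R)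
    (dP : measure_display) (SP : measurableType dP) (PP : probability SP R)
    (p : R)
    (dz : measure_display) (Sz : measurableType dz) (Pz : probability Sz R)
    (F : Sy -> SP -> bool -> Sz -> R) : \bar R :=
  (\int[Py]_sy \int[PP]_sP \int[bernoulli_prob p]_b \int[Pz]_sz (F sy sP b sz)%:E)%E.

(* Main.v *)
Require Import Defs.
From HB Require Import structures.
From mathcomp Require Import all_boot all_order all_algebra.
From mathcomp Require Import all_classical all_reals all_analysis.
From mathcomp Require Import ring lra measurable_realfun.
Import Order.TTheory GRing.Theory Num.Theory.
Import numFieldNormedType.Exports.
Local Open Scope classical_set_scope.
Local Open Scope ring_scope.


Section Vec.
Context {R : realType} {d : nat}.
Implicit Types (u v w : 'rV[R]_d) (a b c : R).

Lemma dotC u v : dot u v = dot v u.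
Proof. by apply: eq_bigr => k _; rewrite mulrC. Qed.

Lemma dotDl u v w : dot (u + v) w = dot u w + dot v w.
Proof. by rewrite /dot -big_split; apply: eq_bigr => k _; rewrite !mxE mulrDl. Qed.

Lemma dotDr u v w : dot w (u + v) = dot w u + dot w v.
Proof. by rewrite dotC dotDl !(dotC w). Qed.

Lemma dotZl a u v : dot (a *: u) v = a * dot u v.
Proof. by rewrite /dot mulr_sumr; apply: eq_bigr => k _; rewrite !mxE mulrA. Qed.

Lemma dotZr a u v : dot u (a *: v) = a * dot u v.
Proof. by rewrite dotC dotZl dotC. Qed.

Lemma dotNl u v : dot (- u) v = - dot u v.
Proof. by rewrite -scaleN1r dotZl mulN1r. Qed.

Lemma dotNr u v : dot u (- v) = - dot u v.
Proof. by rewrite dotC dotNl dotC. Qed.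

Lemma dotBl u v w : dot (u - v) w = dot u w - dot v w.
Proof. by rewrite dotDl dotNl. Qed.

Lemma dotBr u v w : dot w (u - v) = dot w u - dot w v.
Proof. by rewrite dotDr dotNr. Qed.

Lemma dot0l u : dot 0 u = 0.
Proof. by rewrite /dot big1 // => k _; rewrite mxE mul0r. Qed.

Lemma sqn_ge0 u : 0 <= sqn u.
Proof. by rewrite /sqn /dot sumr_ge0 // => k _; rewrite -expr2 sqr_ge0. Qed.

Lemma sqn_eq0 u : sqn u = 0 -> u = 0.
Proof.
move=> h; apply/rowP => k; rewrite mxE.
have : \sum_(j < d) u 0 j * u 0 j == 0 by apply/eqP.
rewrite psumr_eq0 => [/allP/(_ k (mem_index_enum _))|j _]; last by rewrite -expr2 sqr_ge0.
by rewrite /= mulf_eq0 orbb => /eqP.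
Qed.

Lemma sqnD u v : sqn (u + v) = sqn u + 2 * dot u v + sqn v.
Proof. rewrite /sqn dotDl !dotDr (dotC v u); ring. Qed.

Lemma sqnB u v : sqn (u - v) = sqn u - 2 * dot u v + sqn v.
Proof. rewrite /sqn dotDl !dotDr !dotNl !dotNr opprK (dotC v u); ring. Qed.

Lemma sqnZ a u : sqn (a *: u) = a ^+ 2 * sqn u.
Proof. by rewrite /sqn dotZl dotZr mulrA expr2. Qed.

Lemma sqnN u : sqn (- u) = sqn u.
Proof. by rewrite /sqn dotNl dotNr opprK. Qed.

Lemma dot_sq u v : dot u v ^+ 2 <= sqn u * sqn v.
Proof.
have [v0|vn0] := eqVneq (sqn v) 0.
  by rewrite (sqn_eq0 _ v0) dotC dot0l expr0n /= mulr_ge0 ?sqn_ge0.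
have vp : 0 < sqn v by rewrite lt_def vn0 sqn_ge0.
have := sqn_ge0 (sqn v *: u - dot u v *: v).
rewrite sqnB !sqnZ dotZl dotZr => h.
have : 0 <= sqn v * (sqn u * sqn v - dot u v ^+ 2) by
  rewrite /sqn in h vp *; nra.
by rewrite pmulr_rge0 // subr_ge0.
Qed.

Lemma cauchy_schwarz u v : dot u v <= enorm u * enorm v.
Proof.
rewrite /enorm -sqrtrM ?sqn_ge0 //.
apply: le_trans (ler_norm _) _.
rewrite -sqrtr_sqr ler_sqrt; first exact: dot_sq.
by rewrite mulr_ge0 ?sqn_ge0.
Qed.

Lemma young u v c : 0 < c -> 2 * dot u v <= c * sqn u + c^-1 * sqn v.
Proof.
move=> c0; have := sqn_ge0 (c *: u - v).
rewrite sqnB sqnZ dotZl => h.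
have ci : c * c^-1 = 1 by rewrite divff // gt_eqF.
have cip : 0 < c^-1 by rewrite invr_gt0.
set A := sqn u in h *; set B := sqn v in h *; set D := dot u v in h *.
have h2 : 0 <= c^-1 * (c ^+ 2 * A - 2 * (c * D) + B) by rewrite mulr_ge0 // ltW.
have e : c^-1 * (c ^+ 2 * A - 2 * (c * D) + B) = c * A - 2 * D + c^-1 * B.
  by field; rewrite gt_eqF.
rewrite e in h2; lra.
Qed.

Lemma sqnD_le u v c : 0 < c -> sqn (u + v) <= (1 + c) * sqn u + (1 + c^-1) * sqn v.
Proof. move=> c0; rewrite sqnD; have := @young u v c c0; lra. Qed.

Lemma sqnD_le2 u v : sqn (u + v) <= 2 * sqn u + 2 * sqn v.
Proof. have := @sqnD_le u v 1 ltr01; rewrite invr1; lra. Qed.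

End Vec.


Section Anal.
Context {R : realType} {d : nat}.
Implicit Types (u v w x y : 'rV[R]_d).

Lemma phi_derive (f : 'rV[R]_d -> R) g x v (t : R) : is_grad f g ->
  is_derive t (1 : R) (fun s : R => f (s *: v + x)) (dot (g (t *: v + x)) v).
Proof.
move=> hg; have [df dv] := hg (t *: v + x).
have E : (fun h : R => h^-1 *: (((fun s : R => f (s *: v + x)) \o shift t) (h *: 1)
            - f (t *: v + x))) =
         (fun h : R => h^-1 *: ((f \o shift (t *: v + x)) (h *: v) - f (t *: v + x))).
  apply/funext => h /=; congr (_ *: (f _ - _)).
  by rewrite -[h%:A]/(h * 1) mulr1 scalerDl addrA.
constructor.
  rewrite /derivable E; exact: diff_derivable.
rewrite /derive E -dv -deriveE //.
Qed.

Lemma grad_ineq (f : 'rV[R]_d -> R) g y w : convex_fun f -> is_grad f g ->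
  f y + dot (g y) (w - y) <= f w.
Proof.
move=> cf hg; set v := w - y.
have [df dv] := hg y.
have dvb : derivable f y v by exact: diff_derivable.
set q := fun h : R => h^-1 *: ((f \o shift y) (h *: v) - f y).
have cq : q @ 0^' --> 'D_v f y by exact: dvb.
have cqr : q @ 0^'+ --> 'D_v f y.
  move=> A /cq /nbhs_ballP [_ /posnumP[e] xe_A].
  by exists e%:num => //= z xe_z /gt_eqF/negbT/xe_A; exact.
have : 'D_v f y <= f w - f y.
  apply: (cvgr_to_le cqr); near=> h.
  have h0 : 0 < h by near: h; exact: nbhs_right_gt.
  have h1 : h <= 1 by near: h; exact: nbhs_right_le.
  have := cf w y h; rewrite ltW // h1 => /(_ isT).
  have -> : h *: w + (1 - h) *: y = h *: v + y.
    by rewrite /v scalerBr scalerBl scale1r addrA addrAC.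
  rewrite /q /= => H.
  rewrite -[_ *: _]/(h^-1 * _) ler_pdivrMl //; lra.
by rewrite deriveE // dv; lra.
Unshelve. all: by end_near.
Qed.

Lemma enormZ (a : R) u : enorm (a *: u) = `|a| * enorm u.
Proof. by rewrite /enorm sqnZ sqrtrM ?sqr_ge0 // sqrtr_sqr. Qed.

Lemma enorm_sq u : enorm u ^+ 2 = sqn u.
Proof. by rewrite /enorm sqr_sqrtr // sqn_ge0. Qed.

Lemma enorm_ge0 u : 0 <= enorm u.
Proof. exact: sqrtr_ge0. Qed.

Lemma descent (f : 'rV[R]_d -> R) g (L : R) x w : 0 <= L -> is_grad f g -> smooth g L ->
  f w <= f x + dot (g x) (w - x) + L / 2 * sqn (w - x).
Proof.
move=> L0 hg sg; set v := w - x.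
set K := dot (g x) v; set c := L / 2 * sqn v.
pose phi := fun s : R => f (s *: v + x).
pose psi := phi - K \*: id - c \*: (id * id : R -> R).
have dpsi : forall t : R, is_derive t (1:R) psi (dot (g (t *: v + x)) v - K *: 1 - c *: (t *: 1 + t *: 1)).
  move=> t; rewrite /psi.
  apply: is_deriveB; first apply: is_deriveB.
  - exact: phi_derive.
have cpsi : {within `[0, 1], continuous psi}.
  apply: continuous_subspaceT => t.
  apply: differentiable_continuous; apply/derivable1_diffP.
  exact: (dpsi t).(ex_derive).
have D1 : forall t : R, t \in `]0, 1[ -> derivable psi t 1.
  by move=> t _; exact: (dpsi t).(ex_derive).
have D2 : forall t : R, t \in `]0, 1[ -> (psi^`())%classic t <= 0.
  move=> t; rewrite in_itv /= => /andP[t0 t1].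
  rewrite derive1E (dpsi t).(derive_val).
  rewrite /GRing.scale /= !mulr1.
  have : dot (g (t *: v + x)) v - K <= L * t * sqn v.
    rewrite /K -dotBl.
    apply: le_trans (cauchy_schwarz _ _) _.
    apply: le_trans (ler_wpM2r (enorm_ge0 _) (sg _ _)) _.
    rewrite addrK enormZ ger0_norm; last exact: ltW.
    by rewrite -enorm_sq expr2 !mulrA.
  rewrite /c; have := sqn_ge0 v; nra.
have i1 : (1:R) \in `[0, 1] by rewrite in_itv /= ler01 lexx.
have i0 : (0:R) \in `[0, 1] by rewrite in_itv /= ler01 lexx.
have := @ler0_derive1_le_cc R psi 0 1 D1 D2 cpsi 1 0 i1 i0 ler01.
have e1 : psi 1 = f (1 *: v + x) - K * 1 - c * (1 * 1) by reflexivity.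
have e0 : psi 0 = f (0 *: v + x) - K * 0 - c * (0 * 0) by reflexivity.
rewrite e1 e0 scale0r add0r scale1r !mulr0 !subr0 !mulr1.
have -> : v + x = w by rewrite /v subrK.
lra.
Qed.

Lemma smooth_sqn (g : 'rV[R]_d -> 'rV[R]_d) L x y : 0 <= L -> smooth g L ->
  sqn (g x - g y) <= L ^+ 2 * sqn (x - y).
Proof.
move=> L0 sg; rewrite -!enorm_sq -exprMn ler_pXn2r ?nnegrE ?enorm_ge0 ?mulr_ge0 ?enorm_ge0 //.
Qed.

Lemma cocoercive (f : 'rV[R]_d -> R) g L y z : 0 <= L -> convex_fun f -> is_grad f g ->
  smooth g L -> sqn (g z - g y) <= 2 * L * (f z - f y - dot (g y) (z - y)).
Proof.
move=> L0 cf hg sg.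
have Dge0 : 0 <= f z - f y - dot (g y) (z - y) by have := grad_ineq _ _ y z cf hg; lra.
have [L_0|Lp] := eqVneq L 0.
  subst L.
  have := smooth_sqn _ _ z y L0 sg; rewrite expr2 !mul0r => h.
  by rewrite mulr0 mul0r.
have Lgt : 0 < L by rewrite lt_def Lp.
set e := g z - g y.
set w := z - L^-1 *: e.
have A := grad_ineq _ _ y w cf hg.
have B := descent _ _ _ z w L0 hg sg.
have ew1 : w - y = (z - y) - L^-1 *: e by rewrite /w addrAC.
have ew2 : w - z = - (L^-1 *: e) by rewrite /w addrAC subrr add0r.
rewrite ew1 dotBr dotZr in A.
rewrite ew2 dotNr dotZr sqnN sqnZ in B.
have eS : dot (g z) e - dot (g y) e = sqn e by rewrite /sqn -dotBl.
have li : L * L^-1 = 1 by rewrite divff.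
have lip : 0 < L^-1 by rewrite invr_gt0.
have Sge := sqn_ge0 e.
set a := dot (g y) e in A eS; set b := dot (g z) e in B eS.
set S := sqn e in eS Sge B *.
set li' := L^-1 in A B li lip.
have key : li' * S / 2 <= f z - f y - dot (g y) (z - y).
  have : L / 2 * (li' ^+ 2 * S) = li' * S / 2.
    transitivity ((L * li') * li' * S / 2); first ring. by rewrite li mul1r.
  move=> E; rewrite E in B; nra.
have : L * (li' * S / 2) <= L * (f z - f y - dot (g y) (z - y)) by rewrite ler_pM2l.
rewrite !mulrA li mul1r; lra.
Qed.

End Anal.


Section Prob.
Context {R : realType} {dS : measure_display} {S : measurableType dS}.
Variable P : probability S R.

Definition iR (f : S -> R) := P.-integrable setT (EFin \o f).

Lemma iR_cst k : iR (fun _ => k).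
Proof. exact: finite_measure_integrable_cst. Qed.

Lemma iR_D f g : iR f -> iR g -> iR (fun s => f s + g s).
Proof. by move=> hf hg; apply: (eq_integrable measurableT _ _ _ (integrableD measurableT hf hg)). Qed.

Lemma iR_Z k f : iR f -> iR (fun s => k * f s).
Proof. by move=> hf; apply: (eq_integrable measurableT _ _ _ (integrableZl measurableT k hf)). Qed.

Lemma iR_N f : iR f -> iR (fun s => - f s).
Proof. by move=> hf; apply: (eq_integrable measurableT _ _ _ (integrableN hf)). Qed.

Lemma iR_B f g : iR f -> iR g -> iR (fun s => f s - g s).
Proof. by move=> hf hg; apply: iR_D => //; exact: iR_N. Qed.

Lemma iR_sum (I : Type) (r : seq I) (F : I -> S -> R) :
  (forall i, iR (F i)) -> iR (fun s => \sum_(i <- r) F i s).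
Proof.
move=> h; elim: r => [|i r ih].
  by under [fun s => _]funext do rewrite big_nil; exact: iR_cst.
by under [fun s => _]funext do rewrite big_cons; exact: iR_D.
Qed.

Local Open Scope ereal_scope.

Lemma E_cst (k : R) : \int[P]_s (k%:E) = k%:E.
Proof. have := integral_cst P measurableT k%:E; move=> ->. rewrite -[RHS]mule1; congr (_ * _); exact: probability_setT. Qed.

Lemma E_D f g : iR f -> iR g ->
  \int[P]_s ((f s + g s)%R%:E) = \int[P]_s ((f s)%:E) + \int[P]_s ((g s)%:E).
Proof. by move=> hf hg; rewrite -(integralD_EFin measurableT hf hg). Qed.

Lemma E_Z (k : R) f : iR f -> \int[P]_s ((k * f s)%R%:E) = k%:E * \int[P]_s ((f s)%:E).
Proof. by move=> hf; rewrite -(integralZl measurableT hf). Qed.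

Lemma E_sum (I : Type) (r : seq I) (F : I -> S -> R) : (forall i, iR (F i)) ->
  \int[P]_s ((\sum_(i <- r) F i s)%R%:E) = \sum_(i <- r) \int[P]_s ((F i s)%:E).
Proof.
move=> h; under eq_integral do rewrite -sumEFin.
by rewrite (integral_sum measurableT).
Qed.

End Prob.


Section Inner.
Context {R : realType} {d : nat} {dS : measure_display} {S : measurableType dS}.
Variable P : probability S R.

Lemma iR_meas (f : S -> R) : iR P f -> measurable_fun setT f.
Proof. by move=> h; apply/measurable_EFinP; exact: (measurable_int _ h). Qed.

Lemma inner_one (C : S -> 'rV[R]_d -> 'rV[R]_d) om beta (a : 'rV[R]_d) :
  in_U P C om -> 0 < beta -> beta * (om + 1) <= 1 ->
  iR P (fun s => sqn (beta *: C s a - a)) /\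
  (\int[P]_s (sqn (beta *: C s a - a))%:E <= ((1 - beta) * sqn a)%:E)%E.
Proof.
move=> hU b0 bom.
have [hc hQ] := hU a.
pose c j s := C s a 0 j.
have ic j : iR P (c j) by exact: (hc j).1.
have Ec j : (\int[P]_s (c j s)%:E = (a 0 j)%:E)%E by exact: (hc j).2.
pose Q s := sqn (C s a - a).
have QE s : Q s = \sum_(j < d) (c j s - a 0 j) * (c j s - a 0 j).
  by rewrite /Q /sqn /dot; apply: eq_bigr => j _; rewrite !mxE.
have mQ : measurable_fun setT Q.
  rewrite (_ : Q = fun s => \sum_(j < d) (c j s - a 0 j) * (c j s - a 0 j)); last first.
    by apply/funext => s; rewrite QE.
  apply: measurable_sum => j; apply: measurable_funM;
    apply: measurable_funB => //; exact: iR_meas.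
have Q0 s : 0 <= Q s by exact: sqn_ge0.
have iQ : iR P Q.
  apply/integrableP; split; first exact/measurable_EFinP.
  under eq_integral do rewrite /= ger0_norm //.
  by apply: le_lt_trans hQ _; rewrite ltey.
set I := (\int[P]_s (Q s)%:E)%E in hQ.
have I0 : (0 <= I)%E by apply: integral_ge0 => s _; rewrite lee_fin.
have IE : I = (fine I)%:E.
  by rewrite fineK // ge0_fin_numE // (le_lt_trans hQ) // ltey.
pose b j := - (2 * (beta * (1 - beta))) * a 0 j.
pose K := (1 - beta) ^+ 2 * sqn a.
have ptw s : sqn (beta *: C s a - a) =
    beta ^+ 2 * Q s + \sum_(j < d) b j * (c j s + - a 0 j) + K.
  have -> : beta *: C s a - a = beta *: (C s a - a) - (1 - beta) *: a.
    by rewrite scalerBr scalerBl scale1r opprB addrA subrK.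
  rewrite sqnB !sqnZ dotZl dotZr /Q /K.
  have -> : dot (C s a - a) a = \sum_(j < d) (c j s + - a 0 j) * a 0 j.
    by rewrite /dot; apply: eq_bigr => j _; rewrite !mxE.
  congr (_ + _ + _).
  rewrite /b !mulr_sumr -sumrN; apply: eq_bigr => j _; ring.
have icj j : iR P (fun s => b j * (c j s + - a 0 j)).
  by apply: iR_Z; apply: iR_D => //; exact: iR_cst.
have iS : iR P (fun s => \sum_(j < d) b j * (c j s + - a 0 j)) by exact: iR_sum.
have iQ2 : iR P (fun s => beta ^+ 2 * Q s) by exact: iR_Z.
split.
  have -> : (fun s => sqn (beta *: C s a - a)) =
     (fun s => beta ^+ 2 * Q s + \sum_(j < d) b j * (c j s + - a 0 j) + K).
    by apply/funext => s; rewrite ptw.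
  by apply: iR_D; [apply: iR_D|exact: iR_cst].
under eq_integral do rewrite ptw.
rewrite E_D; [|by apply: iR_D|exact: iR_cst].
rewrite E_D // (E_Z P (beta ^+ 2) Q iQ) (E_sum P _ _ _ icj) E_cst.
rewrite big1 ?adde0; last first.
  move=> j _; rewrite E_Z; last by apply: iR_D => //; exact: iR_cst.
  by rewrite E_D ?Ec ?E_cst //; [rewrite -EFinD subrr mule0 | exact: iR_cst].
have [J [IJ hJ]] : exists J, I = J%:E /\ J <= om * sqn a.
  by exists (fine I); split => //; rewrite -lee_fin -IE.
have J0 : 0 <= J by rewrite -lee_fin -IJ.
rewrite -/I IJ -EFinM -EFinD lee_fin /K.
have A0 := sqn_ge0 a.
have h1 : 0 <= beta ^+ 2 * (om * sqn a - J) by rewrite mulr_ge0 ?sqr_ge0 // subr_ge0.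
have h2 : 0 <= sqn a * beta * (1 - beta * (om + 1)) by rewrite !mulr_ge0 ?subr_ge0 // ltW.
rewrite expr2 in h1 *; nra.
Qed.

Lemma inner_all (n : nat) (C : 'I_n -> S -> 'rV[R]_d -> 'rV[R]_d) om beta
    (h g : 'I_n -> 'rV[R]_d) :
  (forall i, in_U P (C i) om) -> 0 < beta -> beta * (om + 1) <= 1 ->
  (\int[P]_s ((n%:R^-1 * \sum_(i < n) sqn (h i + beta *: C i s (g i - h i) - g i))%:E)
    <= ((1 - beta) * (n%:R^-1 * \sum_(i < n) sqn (h i - g i)))%:E)%E.
Proof.
move=> hU b0 bom.
have e s i : h i + beta *: C i s (g i - h i) - g i = beta *: C i s (g i - h i) - (g i - h i).
  by rewrite opprB addrA [h i + _]addrC.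
under eq_integral do rewrite mulr_sumr.
have ii i := inner_one (C i) om beta (g i - h i) (hU i) b0 bom.
rewrite E_sum; last first.
  move=> i; apply: iR_Z; under [fun s => _]funext do rewrite e; exact: (ii i).1.
rewrite mulrA (mulrC (1 - beta)) -mulrA mulr_sumr mulr_sumr -sumEFin.
apply: lee_sum => i _.
rewrite E_Z; last by under [fun s => _]funext do rewrite e; exact: (ii i).1.
under eq_integral do rewrite e.
rewrite EFinM; apply: lee_pmul => //.
  by apply: integral_ge0 => s _; rewrite lee_fin sqn_ge0.
have -> : h i - g i = - (g i - h i) by rewrite opprB.
by rewrite sqnN; exact: (ii i).2.
Qed.

End Inner.


Lemma le_int_nm {R : realType} {dT : measure_display} {T : measurableType dT}
  (mu : {measure set T -> \bar R}) (f g : T -> \bar R) :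
  (forall x, (0 <= f x)%E) -> (forall x, (f x <= g x)%E) ->
  (\int[mu]_x f x <= \int[mu]_x g x)%E.
Proof.
move=> f0 fg; have g0 x : (0 <= g x)%E := le_trans (f0 x) (fg x).
rewrite !ge0_integralTE //.
apply: le_ereal_sup => _ [h hf <-]; exists h => // x; exact: le_trans (hf x) (fg x).
Qed.

Section MV.
Context {R : realType} {d : nat} {dS : measure_display} {S : measurableType dS}.
Definition MV (V : S -> 'rV[R]_d) := forall k, measurable_fun setT (fun s => V s 0 k).

Lemma MV_cst (v : 'rV[R]_d) : MV (fun _ => v).
Proof. by move=> k; exact: measurable_cst. Qed.

Lemma MV_D V W : MV V -> MV W -> MV (fun s => V s + W s).
Proof.
move=> hV hW k; rewrite (_ : (fun s => (V s + W s) 0 k) = (fun s => V s 0 k + W s 0 k)).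
  exact: measurable_funD.
by apply/funext => s; rewrite mxE.
Qed.

Lemma MV_Z (c : R) V : MV V -> MV (fun s => c *: V s).
Proof.
move=> hV k; rewrite (_ : (fun s => (c *: V s) 0 k) = (fun s => c * V s 0 k)).
  by apply: measurable_funM => //; exact: measurable_cst.
by apply/funext => s; rewrite mxE.
Qed.

Lemma MV_N V : MV V -> MV (fun s => - V s).
Proof.
move=> hV; rewrite (_ : (fun s => - V s) = (fun s => (-1) *: V s)).
  exact: MV_Z.
by apply/funext => s; rewrite scaleN1r.
Qed.

Lemma MV_B V W : MV V -> MV W -> MV (fun s => V s - W s).
Proof. by move=> hV hW; apply: MV_D => //; exact: MV_N. Qed.

Lemma MV_sum (I : Type) (r : seq I) (F : I -> S -> 'rV[R]_d) :
  (forall i, MV (F i)) -> MV (fun s => \sum_(i <- r) F i s).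
Proof.
move=> h; elim: r => [|i r ih].
  by rewrite (_ : (fun s => _) = fun _ => 0); [exact: MV_cst|apply/funext => s; rewrite big_nil].
rewrite (_ : (fun s => _) = fun s => F i s + \sum_(j <- r) F j s).
  exact: MV_D.
by apply/funext => s; rewrite big_cons.
Qed.

Lemma MV_sqn V : MV V -> measurable_fun setT (fun s => sqn (V s)).
Proof.
move=> hV; rewrite /sqn /dot; apply: measurable_sum => k.
exact: measurable_funM.
Qed.

End MV.

Section Agg.
Context {R : realType} {d : nat}.

Lemma dot_suml (I : Type) (r : seq I) (F : I -> 'rV[R]_d) w :
  dot (\sum_(i <- r) F i) w = \sum_(i <- r) dot (F i) w.
Proof.
elim: r => [|i r ih]; first by rewrite !big_nil dot0l.
by rewrite !big_cons dotDl ih.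
Qed.

Lemma Lmax_ge (n : nat) (L : 'I_n -> R) i : L i <= Lmax L.
Proof.
rewrite /Lmax; have : i \in index_enum 'I_n by exact: mem_index_enum.
elim: (index_enum _) => [//|j r ih]; rewrite in_cons big_cons => /orP[/eqP->|/ih h].
  by rewrite le_max lexx.
by rewrite le_max h orbT.
Qed.

Lemma bregman_avg (n : nat) (f : 'I_n -> 'rV[R]_d -> R) gf z y :
  bregman (favg f) (gavg gf) z y =
  n%:R^-1 * \sum_(i < n) (f i z - f i y - dot (gf i y) (z - y)).
Proof.
rewrite /bregman /favg /gavg dotZl dot_suml -!mulrBr; congr (_ * _).
by rewrite -!sumrB.
Qed.

Lemma avg_coco (n : nat) (f : 'I_n -> 'rV[R]_d -> R) gf (L : 'I_n -> R) z y :
  (forall i, is_grad (f i) (gf i)) -> (forall i, 0 <= L i /\ smooth (gf i) (L i)) ->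
  (forall i, convex_fun (f i)) ->
  n%:R^-1 * \sum_(i < n) sqn (gf i z - gf i y) <=
  2 * Lmax L * bregman (favg f) (gavg gf) z y.
Proof.
move=> hg hL hc; rewrite bregman_avg mulrCA; apply: ler_wpM2l; first by rewrite invr_ge0.
rewrite mulr_sumr; apply: ler_sum => i _.
have D0 : 0 <= f i z - f i y - dot (gf i y) (z - y) by have := grad_ineq _ _ y z (hc i) (hg i); lra.
apply: le_trans (cocoercive _ _ _ y z (hL i).1 (hc i) (hg i) (hL i).2) _.
by rewrite ler_wpM2r // ler_wpM2l // Lmax_ge.
Qed.

End Agg.


Lemma det_bound {R : realType} {d n : nat} (f : 'I_n -> 'rV[R]_d -> R) gf (L : 'I_n -> R)
  (Lhat p beta : R) (h : 'I_n -> 'rV[R]_d) (z X y1 : 'rV[R]_d) :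
  (0 < n)%N ->
  (forall i, is_grad (f i) (gf i)) -> (forall i, 0 <= L i /\ smooth (gf i) (L i)) ->
  (forall x y, n%:R^-1 * \sum_(i < n) sqn (gf i x - gf i y) <= Lhat ^+ 2 * sqn (x - y)) ->
  (forall i, convex_fun (f i)) ->
  0 < p <= 1 -> 0 < beta <= 1 ->
  p * ((1 - beta) * (n%:R^-1 * \sum_(i < n) sqn (h i - gf i X))) +
  (1 - p) * ((1 - beta) * (n%:R^-1 * \sum_(i < n) sqn (h i - gf i z))) <=
  8 * p * (1 + p / beta) * Lmax L * bregman (favg f) (gavg gf) z y1 +
  4 * p * (1 + p / beta) * Lhat ^+ 2 * sqn (X - y1) +
  (1 - beta / 2) * (n%:R^-1 * \sum_(i < n) sqn (h i - gf i z)).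
Proof.
move=> n0 hg hL hLh hc /andP[p0 p1] /andP[b0 b1].
set E1 := n%:R^-1 * \sum_(i < n) sqn (h i - gf i X).
set E0 := n%:R^-1 * \sum_(i < n) sqn (h i - gf i z).
set G := n%:R^-1 * \sum_(i < n) sqn (gf i z - gf i y1).
set H := n%:R^-1 * \sum_(i < n) sqn (gf i y1 - gf i X).
set M := Lmax L * bregman (favg f) (gavg gf) z y1.
set Q := sqn (X - y1).
have ni : 0 <= n%:R^-1 :> R by rewrite invr_ge0.
have E00 : 0 <= E0 by rewrite mulr_ge0 // sumr_ge0 // => i _; exact: sqn_ge0.
have G0 : 0 <= G by rewrite mulr_ge0 // sumr_ge0 // => i _; exact: sqn_ge0.
have H0 : 0 <= H by rewrite mulr_ge0 // sumr_ge0 // => i _; exact: sqn_ge0.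
have Q0 : 0 <= Q by exact: sqn_ge0.
have GM : G <= 2 * M by rewrite /M mulrA; exact: avg_coco.
have HQ : H <= Lhat ^+ 2 * Q.
  by apply: le_trans (hLh y1 X) _; rewrite /Q -opprB sqnN.
set c := beta / (2 * p).
have c0 : 0 < c by rewrite divr_gt0 // mulr_gt0.
have E1b : E1 <= (1 + c) * E0 + (1 + c^-1) * (2 * G + 2 * H).
  rewrite /E1 /E0 /G /H.
  have -> : (1 + c) * (n%:R^-1 * \sum_(i < n) sqn (h i - gf i z)) +
    (1 + c^-1) * (2 * (n%:R^-1 * \sum_(i < n) sqn (gf i z - gf i y1)) +
                  2 * (n%:R^-1 * \sum_(i < n) sqn (gf i y1 - gf i X))) =
    n%:R^-1 * \sum_(i < n) ((1 + c) * sqn (h i - gf i z) + (1 + c^-1) *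
       (2 * sqn (gf i z - gf i y1) + 2 * sqn (gf i y1 - gf i X))).
    rewrite big_split /= -!mulr_sumr big_split /= -!mulr_sumr; ring.
  apply: ler_wpM2l => //; apply: ler_sum => i _.
  have -> : h i - gf i X = (h i - gf i z) + ((gf i z - gf i y1) + (gf i y1 - gf i X)).
    by rewrite !addrA !subrK.
  apply: le_trans (sqnD_le _ _ _ c0) _.
  apply: lerD => //; apply: ler_wpM2l; first by rewrite addr_ge0 // invr_ge0 ltW.
  exact: sqnD_le2.
have M0 : 0 <= M by rewrite -(@ler_pM2l _ 2) // mulr0; exact: le_trans G0 GM.
have ci : c^-1 = 2 * (p / beta) by rewrite /c invf_div; field; rewrite gt_eqF.
have pc : p * c = beta / 2 by rewrite /c; field; rewrite gt_eqF.
rewrite ci in E1b.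
set r := p / beta in E1b *.
have r0 : 0 <= r by rewrite divr_ge0 // ltW.
have E1b' : E1 <= (1 + c) * E0 + (1 + 2 * r) * (4 * M + 2 * (Lhat ^+ 2 * Q)).
  apply: le_trans E1b _; apply: lerD => //; apply: ler_wpM2l.
    by rewrite addr_ge0 // mulr_ge0.
  lra.
have L2Q : 0 <= Lhat ^+ 2 * Q by rewrite mulr_ge0 // sqr_ge0.
have t1 : p * ((1 - beta) * E1) <= p * (1 - beta) * ((1 + c) * E0) +
    p * (1 - beta) * ((1 + 2 * r) * (4 * M + 2 * (Lhat ^+ 2 * Q))).
  rewrite -mulrDr -mulrA; apply: ler_wpM2l; first exact: ltW.
  apply: ler_wpM2l; first by rewrite subr_ge0.
  exact: E1b'.
have t2 : p * (1 - beta) * ((1 + c) * E0) + (1 - p) * ((1 - beta) * E0) <=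
    (1 - beta / 2) * E0.
  have -> : p * (1 - beta) * ((1 + c) * E0) + (1 - p) * ((1 - beta) * E0) =
    (1 - beta) * (1 + p * c) * E0 by ring.
  rewrite pc; apply: ler_wpM2r => //; nra.
have t3 : p * (1 - beta) * ((1 + 2 * r) * (4 * M + 2 * (Lhat ^+ 2 * Q))) <=
    8 * p * (1 + r) * M + 4 * p * (1 + r) * (Lhat ^+ 2 * Q).
  have A1 : 0 <= 1 + 2 * r by lra.
  have A2 : (1 - beta) * (1 + 2 * r) <= 2 * (1 + r) by nra.
  have A3 : p * ((1 - beta) * (1 + 2 * r)) <= p * (2 * (1 + r)) by rewrite ler_pM2l.
  have -> : p * (1 - beta) * ((1 + 2 * r) * (4 * M + 2 * (Lhat ^+ 2 * Q))) =
    (p * ((1 - beta) * (1 + 2 * r))) * (4 * M + 2 * (Lhat ^+ 2 * Q)) by ring.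
  have -> : 8 * p * (1 + r) * M + 4 * p * (1 + r) * (Lhat ^+ 2 * Q) =
    (p * (2 * (1 + r))) * (4 * M + 2 * (Lhat ^+ 2 * Q)) by ring.
  by apply: ler_wpM2r => //; rewrite addr_ge0 // mulr_ge0.
have -> : 8 * p * (1 + r) * Lmax L * bregman (favg f) (gavg gf) z y1 = 8 * p * (1 + r) * M.
  by rewrite /M; ring.
have -> : 4 * p * (1 + r) * Lhat ^+ 2 * Q = 4 * p * (1 + r) * (Lhat ^+ 2 * Q) by ring.
lra.
Qed.


Theorem lemma7 (R : realType) (d n : nat)
    (f : 'I_n -> 'rV[R]_d -> R) (gf : 'I_n -> 'rV[R]_d -> 'rV[R]_d)
    (L : 'I_n -> R) (Lhat Lf mu : R) (xstar : 'rV[R]_d)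
    (Lb p tau alpha om beta : R)
    (dy : measure_display) (Sy : measurableType dy) (Py : probability Sy R)
    (Cy : 'I_n -> Sy -> 'rV[R]_d -> 'rV[R]_d)
    (dP : measure_display) (SP : measurableType dP) (PP : probability SP R)
    (CP : SP -> 'rV[R]_d -> 'rV[R]_d)
    (dz : measure_display) (Sz : measurableType dz) (Pz : probability Sz R)
    (Cz : 'I_n -> Sz -> 'rV[R]_d -> 'rV[R]_d)
    (s : state R d n) :
  (0 < n)%N ->
  (* gradients *)
  (forall i, is_grad (f i) (gf i)) ->
  (* Assumption 1 *)
  (forall i, 0 <= L i /\ smooth (gf i) (L i)) ->
  0 < Lhat ->
  (forall x y, n%:R^-1 * \sum_(i < n) sqn (gf i x - gf i y) <= Lhat ^+ 2 * sqn (x - y)) ->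
  (* Assumption 2 *)
  smooth (gavg gf) Lf ->
  (* Assumption 3 *)
  (forall i, convex_fun (f i)) ->
  0 <= mu -> strongly_convex (favg f) mu ->
  (forall x, favg f xstar <= favg f x) ->
  (* parameters *)
  0 < Lb -> 0 < p <= 1 -> 0 < tau <= 1 -> 0 < alpha <= 1 -> 0 <= om ->
  0 < beta <= (om + 1)^-1 -> 1 <= st_Gam s ->
  (* compressors and Assumption 4 *)
  (forall i, in_U Py (Cy i) om) -> in_B PP CP alpha -> (forall i, in_U Pz (Cz i) om) ->
  mutually_independent Py Cy -> mutually_independent Pz Cz ->
  let It := fun sy sP b sz =>
    step Lb mu p tau alpha beta gf (fun i => Cy i sy) (CP sP) b (fun i => Cz i sz) s in
  let y1 := y_next Lb mu p tau alpha beta s in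
  (Et Py PP p Pz
     (fun sy sP b sz => (n%:R^-1 * \sum_(i < n)
        sqn (it_h (It sy sP b sz) i - gf i (it_z (It sy sP b sz))))%R)
   <= (8 * p * (1 + p / beta) * Lmax L * bregman (favg f) (gavg gf) (st_z s) y1)%:E
      + (4 * p * (1 + p / beta) * Lhat ^+ 2)%:E
        * Et Py PP p Pz (fun sy sP b sz => sqn (it_x (It sy sP b sz) - y1)%R)
      + ((1 - beta / 2) * (n%:R^-1 * \sum_(i < n) sqn (st_h s i - gf i (st_z s))))%:E)%E.
Proof.
move=> n0 hg hL Lh0 hLh sLf hc mu0 sc hmin Lb0 hp htau halpha om0 hbeta G1
  hUy hBP hUz indy indz.
cbv beta zeta.
set y1 := y_next Lb mu p tau alpha beta s.
have [p0 p1] := andP hp; have [b0 ble] := andP hbeta.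
have bom : beta * (om + 1) <= 1.
  by rewrite -(@ler_pM2r _ (om + 1)^-1) ?invr_gt0 ?ltr_wpDl // -mulrA divff ?mulr1 ?mul1r // gt_eqF // ltr_wpDl.
have b1 : beta <= 1.
  apply: le_trans bom; rewrite ler_peMr; [lra | exact: ltW | lra].
pose G := st_Gam s.
pose th := theta_next Lb mu p tau alpha beta G.
pose ga := gamma_next p th G.
pose cs := (Lb + G * mu) / ga.
pose X := fun sy => th *: prox_step (st_hbar s + n%:R^-1 *: \sum_(i < n) Cy i sy (gf i y1 - st_h s i))
   cs (st_u s) mu y1 + (1 - th) *: st_z s.
pose Q := fun sy => sqn (X sy - y1).
have hx : forall sy sP b sz, it_x (step Lb mu p tau alpha beta gf (fun i => Cy i sy) (CP sP) b
    (fun i => Cz i sz) s) = X sy by [].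
have RE : Et Py PP p Pz (fun sy sP b sz => sqn (it_x (step Lb mu p tau alpha beta gf
    (fun i => Cy i sy) (CP sP) b (fun i => Cz i sz) s) - y1)) = (\int[Py]_sy (Q sy)%:E)%E.
  have -> : (fun sy sP b sz => sqn (it_x (step Lb mu p tau alpha beta gf
    (fun i => Cy i sy) (CP sP) b (fun i => Cz i sz) s) - y1)) =
    (fun sy (_ : SP) (_ : bool) (_ : Sz) => Q sy) by [].
  rewrite /Et; apply: eq_integral => sy _.
  by rewrite E_cst E_cst E_cst.
rewrite RE.
have mQ : measurable_fun setT Q.
  apply: MV_sqn; rewrite /X /prox_step.
  apply: MV_B; last exact: MV_cst.
  apply: MV_D; last exact: MV_cst.
  apply: MV_Z; apply: MV_Z; apply: MV_B; first exact: MV_cst.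
  apply: MV_D; first exact: MV_cst.
  apply: MV_Z; apply: MV_sum => i k.
  exact: (iR_meas Py _ ((hUy i _).1 k).1).
pose E0 := n%:R^-1 * \sum_(i < n) sqn (st_h s i - gf i (st_z s)).
pose Dg := bregman (favg f) (gavg gf) (st_z s) y1.
pose c8 := 8 * p * (1 + p / beta) * Lmax L * Dg.
pose c4 := 4 * p * (1 + p / beta) * Lhat ^+ 2.
pose c1 := (1 - beta / 2) * E0.
pose Hf := fun sy => (c8 + c1) + c4 * Q sy.
have Lm0 : 0 <= Lmax L.
  by apply: le_trans (Lmax_ge _ L (Ordinal n0)); exact: (hL _).1.
have Dg0 : 0 <= Dg.
  rewrite /Dg bregman_avg mulr_ge0 ?invr_ge0 // sumr_ge0 // => i _.
  by have := grad_ineq _ _ y1 (st_z s) (hc i) (hg i); lra.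
have pb0 : 0 <= 1 + p / beta by rewrite addr_ge0 // divr_ge0 // ltW.
have c80 : 0 <= c8 by rewrite /c8 !mulr_ge0 // ltW.
have c40 : 0 <= c4 by rewrite /c4 !mulr_ge0 ?sqr_ge0 // ltW.
have c10 : 0 <= c1.
  rewrite /c1 mulr_ge0 //; first lra.
  by rewrite mulr_ge0 ?invr_ge0 // sumr_ge0 // => i _; exact: sqn_ge0.
have inner : forall sy sP b,
  (\int[Pz]_sz ((n%:R^-1 * \sum_(i < n) sqn (it_h (step Lb mu p tau alpha beta gf
     (fun i => Cy i sy) (CP sP) b (fun i => Cz i sz) s) i - gf i (it_z (step Lb mu p tau alpha beta gf
     (fun i => Cy i sy) (CP sP) b (fun i => Cz i sz) s))))%:E) <=
   ((1 - beta) * (n%:R^-1 * \sum_(i < n) sqn (st_h s i - gf i (if b then X sy else st_z s))))%:E)%E.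
  move=> sy sP b.
  exact: (inner_all Pz n Cz om beta (st_h s) (fun i => gf i (if b then X sy else st_z s)) hUz b0 bom).
have p01 : 0 <= p <= 1 by rewrite ltW.
have bern : forall sy sP,
  (\int[bernoulli_prob p]_b \int[Pz]_sz ((n%:R^-1 * \sum_(i < n) sqn (it_h (step Lb mu p tau alpha beta gf
     (fun i => Cy i sy) (CP sP) b (fun i => Cz i sz) s) i - gf i (it_z (step Lb mu p tau alpha beta gf
     (fun i => Cy i sy) (CP sP) b (fun i => Cz i sz) s))))%:E) <= (Hf sy)%:E)%E.
  move=> sy sP.
  apply: le_trans (le_int_nm (bernoulli_prob p) _ _ _ (inner sy sP)) _.
    move=> b; apply: integral_ge0 => sz _; rewrite lee_fin mulr_ge0 ?invr_ge0 //.
    by rewrite sumr_ge0 // => i _; exact: sqn_ge0.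
  rewrite integral_bernoulli_prob //; last first.
    move=> b; rewrite lee_fin mulr_ge0 //; first lra.
    by rewrite mulr_ge0 ?invr_ge0 // sumr_ge0 // => i _; exact: sqn_ge0.
  rewrite /= -!EFinM -EFinD lee_fin /Hf /c8 /c4 /c1 /E0 /Dg /Q.
  have := det_bound f gf L Lhat p beta (st_h s) (st_z s) (X sy) y1 n0 hg hL hLh hc hp
    (_ : 0 < beta <= 1).
  rewrite b0 b1 /= => /(_ isT).
  rewrite [unstable.onem p]/(1 - p) [X in _ -> _ <= X]addrAC; exact. 
have Hf0 : forall sy, 0 <= Hf sy.
  by move=> sy; rewrite /Hf addr_ge0 ?addr_ge0 // mulr_ge0 // sqn_ge0.
rewrite /Et.
apply: le_trans (le_int_nm Py _ (fun sy => (Hf sy)%:E) _ _) _.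
- move=> sy; apply: integral_ge0 => sP _; apply: integral_ge0 => b _.
  apply: integral_ge0 => sz _; rewrite lee_fin mulr_ge0 ?invr_ge0 //.
  by rewrite sumr_ge0 // => i _; exact: sqn_ge0.
- move=> sy; apply: le_trans (le_int_nm PP _ (fun _ => (Hf sy)%:E) _ (bern sy)) _.
    move=> sP; apply: integral_ge0 => b _.
    apply: integral_ge0 => sz _; rewrite lee_fin mulr_ge0 ?invr_ge0 //.
    by rewrite sumr_ge0 // => i _; exact: sqn_ge0.
  by rewrite E_cst.
rewrite /Hf.
under eq_integral do rewrite EFinD EFinM.
rewrite ge0_integralD //; last 3 first.
- by move=> sy _; rewrite lee_fin addr_ge0.
- by move=> sy _; rewrite -EFinM lee_fin mulr_ge0 // sqn_ge0.
- by apply: measurable_funeM; apply/measurable_EFinP.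
rewrite E_cst ge0_integralZl_EFin //; last 2 first.
- by move=> sy _; rewrite lee_fin sqn_ge0.
- exact/measurable_EFinP.
by rewrite EFinD addeAC.
Qed.
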